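(* Let $I$ be a countable set with $|I|\ge2$, let $\mathfrak{M}_i=(S_i,\mathcal{L}_i)$, $i\in I$, be partial linear spaces and $\mathfrak{M}=\bigotimes_{i\in I}\mathfrak{M}_i$. Every degenerate hyperplane of $\mathfrak{M}$ is not flappy.
   Context: A partial linear space is a pair $(S,\mathcal{L})$ of points and lines such that every line has at least two points, every point lies on a line, two distinct lines share at most one point; points are collinear ($a\sim b$) if on a common line, $[a]_\sim$ is the set of points collinear with $a$. A subspace is a set $X$ such that any line meeting it in at least two points lies in it; a hyperplane is a proper subspace meeting every line. A hyperplane $X$ is flappy if for every line $L\subseteq X$ there is $a\notin X$ with $L\subseteq[a]_\sim$. Segre product: point set $S=\prod_{i\in I}S_i$; for $a\in S$, $x\in S_i$, $a[i/x]$ is $a$ with $i$-th coordinate replaced by $x$, and $a[i/A]=\{a[i/x]:x\in A\}$; lines are $a[i/l]$ for $a\in S$, $i\in I$, $l\in\mathcal{L}_i$. For a hyperplane $\mathcal{H}$ of $\mathfrak{M}$, $\mathcal{H}^{[a]}_i=\{x\in S_i: a[i/x]\in\mathcal{H}\}$; $\mathcal{H}$ is non-degenerate if $\mathcal{H}^{[a]}_i$ is a hyperplane of $\mathfrak{M}_i$ for all $a\in S$, $i\in I$, and degenerate otherwise. *)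

(* Defs.v *)
From mathcomp Require Import all_boot.
Set Implicit Arguments. Unset Strict Implicit. Unset Printing Implicit Defensive.

(* Sets of points are predicates; a geometry is a point type S with a
   family of lines L : (S -> Prop) -> Prop. The point set is all of S. *)

Section Geometry.
Variable S : Type.
Variable L : (S -> Prop) -> Prop.

Definition is_pls : Prop :=
  [/\ (forall l, L l -> exists a b, a <> b /\ l a /\ l b),
      (forall a, exists l, L l /\ l a) &
      (forall l1 l2, L l1 -> L l2 ->
         (exists a b, a <> b /\ l1 a /\ l1 b /\ l2 a /\ l2 b) ->
         forall x, l1 x <-> l2 x)].

Definition collinear (a b : S) : Prop := exists l, L l /\ l a /\ l b.

Definition subspace (X : S -> Prop) : Prop :=
  forall l, L l -> (exists a b, a <> b /\ l a /\ l b /\ X a /\ X b) ->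
    forall x, l x -> X x.

Definition hyperplane (X : S -> Prop) : Prop :=
  [/\ subspace X, (exists a, ~ X a) & (forall l, L l -> exists a, l a /\ X a)].

Definition flappy (X : S -> Prop) : Prop :=
  forall l, L l -> (forall x, l x -> X x) ->
    exists a, ~ X a /\ forall x, l x -> collinear a x.

End Geometry.

Definition upd {I : eqType} {S : I -> Type} (a : forall j, S j) (i : I) (x : S i)
  : forall j, S j :=
  fun j => match i =P j with
           | ReflectT e => eq_rect i S x j e
           | ReflectF _ => a j
           end.

Arguments upd {I S} a i x j.

Definition segre_lines {I : eqType} {S : I -> Type}
  (L : forall i, (S i -> Prop) -> Prop) : ((forall i, S i) -> Prop) -> Prop :=
  fun m => exists (a : forall i, S i) (i : I) (l : S i -> Prop),
    L i l /\ forall b, m b <-> exists x, l x /\ b = upd a i x.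

Definition slice {I : eqType} {S : I -> Type} (H : (forall i, S i) -> Prop)
  (a : forall i, S i) (i : I) : S i -> Prop :=
  fun x => H (upd a i x).

Arguments slice {I S} H a i x.

Definition nondegenerate {I : eqType} {S : I -> Type}
  (L : forall i, (S i -> Prop) -> Prop) (H : (forall i, S i) -> Prop) : Prop :=
  forall a i, hyperplane (L i) (slice H a i).

Definition degenerate {I : eqType} {S : I -> Type}
  (L : forall i, (S i -> Prop) -> Prop) (H : (forall i, S i) -> Prop) : Prop :=
  ~ nondegenerate L H.

(* Main.v *)
Require Import Defs.
From mathcomp Require Import all_boot.
From Stdlib Require Import Classical FunctionalExtensionality.

Lemma upd_same (I : eqType) (S : I -> Type) (a : forall j, S j) i x :
  upd a i x i = x.
Proof. rewrite /upd; case: eqP => // e; by rewrite (eq_axiomK e). Qed.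

Lemma upd_other (I : eqType) (S : I -> Type) (a : forall j, S j) i x j :
  i <> j -> upd a i x j = a j.
Proof. move=> ne; rewrite /upd; case: eqP => // e; by case: ne. Qed.

Lemma agree_upd (I : eqType) (S : I -> Type) (a c : forall j, S j) i :
  (forall j, j <> i -> c j = a j) -> c = upd a i (c i).
Proof.
move=> h; apply: functional_extensionality_dep => j.
case: (eqVneq i j) => [<-|/eqP ne]; first by rewrite upd_same.
by rewrite upd_other // h // => e; apply: ne.
Qed.

Lemma coll_case (I : eqType) (S : I -> Type) (L : forall i, (S i -> Prop) -> Prop)
  (a c : forall j, S j) i p :
  collinear (segre_lines L) c (upd a i p) ->
  (forall j, j <> i -> c j = a j) \/ c i = p.
Proof.
case=> m [[a' [k [l' [_ hm]]]] [mc mp]].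
move: mc mp; rewrite !hm => [[x1 [_ ->]] [x2 [_ e]]].
case: (eqVneq k i) => [ek|/eqP nk].
  left; subst k => j nj.
  rewrite upd_other; last by move=> ee; apply: nj.
  have := f_equal (fun f => f j) e => /=.
  rewrite !upd_other //; by move=> ee; apply: nj.
right; rewrite upd_other //.
have := f_equal (fun f => f i) e => /=.
by rewrite upd_same upd_other.
Qed.

Theorem lemma3p7 (I : countType) (S : I -> Type)
  (L : forall i, (S i -> Prop) -> Prop)
  (HL : forall i, is_pls (L i))
  (HI : exists i j : I, i <> j)
  (H : (forall i, S i) -> Prop) :
  hyperplane (segre_lines L) H -> degenerate L H ->
  ~ flappy (segre_lines L) H.
Proof.
move=> [Hsub Hout Hmeet] Hdeg Hfl; apply: Hdeg => a i.
have segl : forall l, L i l -> segre_lines L (fun b => exists x, l x /\ b = upd a i x).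
  move=> l Ll; exists a, i, l; split => // b; done.
split.
- move=> l Ll [p [q [npq [lp [lq [Hp Hq]]]]]] x lx.
  apply: (Hsub _ (segl l Ll)); last by exists x.
  exists (upd a i p), (upd a i q); split.
    by move=> e; apply: npq; have := f_equal (fun f => f i) e; rewrite !upd_same.
  split; first by exists p. split; first by exists q. by [].
- apply: NNPP => nex.
  have all : forall x, H (upd a i x).
    move=> x; apply: NNPP => nx; apply: nex; by exists x.
  case: (HL i) => Hl2 Hpt _.
  case: (Hpt (a i)) => l [Ll _].
  case: (Hl2 l Ll) => p [q [npq [lp lq]]].
  case: (Hfl _ (segl l Ll)).
    by move=> b [x [_ ->]].
  move=> c [nc hc].
  have hp := @coll_case _ _ L a c i _ (hc _ (ex_intro _ p (conj lp erefl))).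
  have hq := @coll_case _ _ L a c i _ (hc _ (ex_intro _ q (conj lq erefl))).
  case: hp => [ag|ep].
    by apply: nc; rewrite (@agree_upd _ _ a c i ag).
  case: hq => [ag|eq].
    by apply: nc; rewrite (@agree_upd _ _ a c i ag).
  by apply: npq; rewrite -ep -eq.
- move=> l Ll; case: (Hmeet _ (segl l Ll)) => b [[x [lx ->]] hb].
  by exists x.
Qed.
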